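(* Let $C=U_d\cdots U_1$ be a depth-$d$ circuit of nearest-neighbor two-qubit Clifford gates on $n$ qubits located at the sites of a $D$-dimensional lattice, with $C_t=U_t\cdots U_1$. Let $b$ be a random error configuration in which each of the $nd$ noise locations $(i,t)$ (qubit $i$, after layer $t$) is independently selected with probability $\gamma$, and let $M_b$ be the set of Pauli operators $C_t^\dagger X_iC_t$, $C_t^\dagger Z_iC_t$ over selected locations $(i,t)$. Define $\Pi_{M_b}=\bigcirc_{P\in M_b}\Pi_P$ where $\Pi_P(\sigma)=\frac12\sigma+\frac12P\sigma P^\dagger$. Partition the lattice into hypercubic sublattices of side length $2d$, let $G$ be the graph on sublattices with adjacency including diagonal neighbors, and let $T_k$ be the set of phaseless Pauli operators whose support is contained within some connected set of $k$ sublattices of $G$ and meets at least $k/2$ sublattices within it. Then there exists a depth threshold $d^*_{local}\le O(\gamma^{-1}3^{2D}+\gamma^{-1}D\log(\gamma^{-1}D))$ such that for $d>d^*_{local}$, $$\mathbf P_b\Big(\bigcup_{s\in T_k}\{\Pi_{M_b}(s)\neq0\}\Big)\le nd\,e^{-k}.$$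
   Context: For a phaseless Pauli $s$, $\Pi_{M_b}(s)=s$ if $s$ commutes with every element of $M_b$ and $\Pi_{M_b}(s)=0$ otherwise. The support of a Pauli operator is the set of qubits on which it acts non-trivially. *)

(* Defs.v *)
From HB Require Import structures.
From mathcomp Require Import all_boot all_order all_algebra.
From mathcomp Require Import reals sequences exp.
Set Implicit Arguments. Unset Strict Implicit. Unset Printing Implicit Defensive.
Import Order.TTheory GRing.Theory Num.Theory.

Definition site (D L : nat) := {ffun 'I_D -> 'I_L}.

Definition lat_adj D L (x y : site D L) : bool :=
  (\sum_(a < D) ((x a - y a) + (y a - x a)))%N == 1%N.

(* a single-qubit phaseless Pauli is (x-bit, z-bit): I=(0,0) X=(1,0) Z=(0,1) Y=(1,1) *)
Definition pauli (D L : nat) := {ffun site D L -> bool * bool}.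

Definition support D L (s : pauli D L) : {set site D L} :=
  [set i | s i != (false, false)].

Definition anti1 (p q : bool * bool) : bool := (p.1 && q.2) (+) (p.2 && q.1).

Definition commute D L (s t : pauli D L) : bool :=
  ~~ odd #|[set i | anti1 (s i) (t i)]|.

Definition pX D L (i : site D L) : pauli D L :=
  [ffun j => if j == i then (true, false) else (false, false)].
Definition pZ D L (i : site D L) : pauli D L :=
  [ffun j => if j == i then (false, true) else (false, false)].

(* A two-qubit Clifford U is represented (modulo phases, which are irrelevant
   for conjugation) by its Heisenberg action  P |-> U^dagger P U  on two-qubit
   phaseless Paulis: an F_2-linear map preserving the symplectic form.
   (Cliffords mod Paulis/phases <-> Sp(4,F_2).) *)
Definition pauli2 := ((bool * bool) * (bool * bool))%type.
Definition xor1 (p q : bool * bool) := (p.1 (+) q.1, p.2 (+) q.2).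
Definition xor2 (p q : pauli2) : pauli2 := (xor1 p.1 q.1, xor1 p.2 q.2).
Definition anti2 (p q : pauli2) : bool := anti1 p.1 q.1 (+) anti1 p.2 q.2.

Record clifford2 := Clifford2 {
  cl_act :> pauli2 -> pauli2;
  cl_lin : forall p q, cl_act (xor2 p q) = xor2 (cl_act p) (cl_act q);
  cl_symp : forall p q, anti2 (cl_act p) (cl_act q) = anti2 p q
}.

Definition gate D L := (site D L * site D L * clifford2)%type.

Definition apply_gate D L (g : gate D L) (s : pauli D L) : pauli D L :=
  let: (i, j, U) := g in
  let: r := U (s i, s j) in
  [ffun k => if k == i then r.1 else if k == j then r.2 else s k].

Definition layer D L := seq (gate D L).

Definition layer_ok D L (U : layer D L) : bool :=
  all (fun g => lat_adj g.1.1 g.1.2) U &&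
  uniq (flatten [seq [:: g.1.1; g.1.2] | g <- U]).

(* Heisenberg action of a whole layer (gates commute, being disjoint) *)
Definition apply_layer D L (U : layer D L) (s : pauli D L) : pauli D L :=
  foldr (@apply_gate D L) s U.

(* Circuit C = U_d ... U_1 given as the list [:: U_1; ...; U_d].
   heis Us t P = C_t^dagger P C_t  with  C_t = U_t ... U_1,
   i.e. apply U_t^dag . U_t first, ..., U_1^dag . U_1 last. *)
Definition heis D L (Us : seq (layer D L)) (t : nat) (P : pauli D L) : pauli D L :=
  foldr (@apply_layer D L) P (take t Us).

(* noise locations (i,t), t : 'I_d standing for "after layer t.+1" *)
Definition M_b D L d (Us : seq (layer D L)) (b : {set site D L * 'I_d})
  : {set pauli D L} :=
  [set P | [exists l in b, (P == heis Us l.2.+1 (pX l.1))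
                        || (P == heis Us l.2.+1 (pZ l.1))]].

(* Pi_M applied to a phaseless Pauli s: s if s commutes with every element of
   M, and 0 (encoded as None) otherwise. *)
Definition Pi_M D L (M : {set pauli D L}) (s : pauli D L) : option (pauli D L) :=
  if [forall P in M, commute s P] then Some s else None.

Definition cell_idx D L (d : nat) (x : site D L) : 'I_D -> nat :=
  fun a => (x a %/ (2 * d))%N.

Definition sublat D L d (x : site D L) : {set site D L} :=
  [set y | [forall a, cell_idx d y a == cell_idx d x a]].

Definition sublats D L d : {set {set site D L}} := [set sublat d x | x : site D L].

Definition G_adj D L d (A B : {set site D L}) : bool :=
  (A != B) &&
  [exists x in A, exists y in B, [forall a,
     ((cell_idx d x a - cell_idx d y a) + (cell_idx d y a - cell_idx d x a) <= 1)%N]].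

Definition G_connected D L d (S : {set {set site D L}}) : bool :=
  (S \subset sublats D L d) &&
  [forall A in S, forall B in S,
     connect (fun U V => [&& U \in S, V \in S & G_adj d U V]) A B].

Definition in_T D L d (k : nat) (s : pauli D L) : bool :=
  [exists S : {set {set site D L}},
    [&& G_connected d S, #|S| == k,
        [forall i in support s, sublat d i \in S] &
        (k <= 2 * #|[set A in S | [exists i in support s, i \in A]]|)%N]].

Definition prob_b (R : realType) D L d (gamma : R)
  (E : {set site D L * 'I_d} -> bool) : R :=
  \sum_(b : {set site D L * 'I_d})
     (if E b then gamma ^+ #|b| * (1 - gamma) ^+ (#|site D L| * d - #|b|)
      else 0).

(* Main.v *)
From Pilot Require Import Defs.
From HB Require Import structures.
From mathcomp Require Import all_boot all_order all_algebra.
From mathcomp Require Import reals sequences exp.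
Import Order.TTheory GRing.Theory Num.Theory.
From mathcomp Require Import zify ring lra.
Import Pilot.Defs.
Set Implicit Arguments. Unset Strict Implicit. Unset Printing Implicit Defensive.


Section Pauli.
Variables D L : nat.
Local Notation site := (site D L).
Local Notation pauli := (pauli D L).
Local Notation p0 := (false, false).

Lemma anti1C p q : anti1 p q = anti1 q p.
Proof. by case: p q => [[] []] [[] []]. Qed.

Lemma anti1_0r p : anti1 p p0 = false.
Proof. by case: p => [[] []]. Qed.

Lemma odd_card_set (f : site -> bool) :
  odd #|[set i | f i]| = \big[addb/false]_i f i.
Proof.
rewrite -sum1_card big_mkcond /=.
rewrite (big_morph odd oddD (erefl (odd 0))).
by apply: eq_bigr => i _; rewrite inE; case: (f i).
Qed.

Lemma commuteE (s t : pauli) : commute s t = ~~ \big[addb/false]_i anti1 (s i) (t i).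
Proof. by rewrite /commute odd_card_set. Qed.

Lemma commuteC (s t : pauli) : commute s t = commute t s.
Proof. by rewrite !commuteE; congr (~~ _); apply: eq_bigr => i _; rewrite anti1C. Qed.

Lemma big_addb2 (f : site -> bool) i j : i != j ->
  \big[addb/false]_x f x = f i (+) f j (+) \big[addb/false]_(x | (x != i) && (x != j)) f x.
Proof.
move=> ij; rewrite (bigD1 i) //= (bigD1 j) /=; last by rewrite eq_sym.
by rewrite addbA.
Qed.

Lemma cl_zero (U : clifford2) : U (p0, p0) = (p0, p0).
Proof.
have := cl_lin U (p0, p0) (p0, p0).
have -> : xor2 (p0, p0) (p0, p0) = (p0, p0) by [].
by case: (U (p0,p0)) => [[[] []] [[] []]].
Qed.

Lemma cl_inj (U : clifford2) : injective U.
Proof.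
move=> p q H.
have K r : anti2 (xor2 p q) r = false.
  rewrite -(cl_symp U) cl_lin H.
  by case: (U q) (U r) => [[[] []] [[] []]] [[[] []] [[] []]].
have : xor2 p q = (p0, p0).
  move: (K ((false,true),p0)) (K ((true,false),p0)) (K (p0,(false,true))) (K (p0,(true,false))).
  by case: (xor2 p q) => [[[] []] [[] []]].
by move: p q {H K} => [[[] []] [[] []]] [[[] []] [[] []]].
Qed.

Definition gate_ok (g : gate D L) := g.1.1 != g.1.2.

Lemma apply_gate_commute (g : gate D L) (s t : pauli) : gate_ok g ->
  commute (apply_gate g s) (apply_gate g t) = commute s t.
Proof.
case: g => [[i j] U]; rewrite /gate_ok /= => ij; rewrite !commuteE (big_addb2 _ ij) [in RHS](big_addb2 _ ij).
rewrite /= !ffunE eqxx [j == i]eq_sym (negbTE ij) eqxx.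
idtac.
congr (~~ (_ (+) _)).
  have := cl_symp U (s i, s j) (t i, t j); rewrite /anti2 /= => <-.
  by case: (U (s i, s j)) (U (t i, t j)).
apply: eq_bigr => x /andP [xi xj]; by rewrite !ffunE (negbTE xi) (negbTE xj).
Qed.

Lemma apply_gate_inj (g : gate D L) : gate_ok g -> injective (apply_gate g).
Proof.
case: g => [[i j] U]; rewrite /gate_ok /= => ij s t H.
have Hk k : apply_gate (i, j, U) s k = apply_gate (i, j, U) t k by rewrite H.
have Hi := Hk i; have Hj := Hk j.
rewrite /= !ffunE eqxx in Hi; rewrite /= !ffunE eqxx eq_sym (negbTE ij) in Hj.
have HU : U (s i, s j) = U (t i, t j).
  by move: Hi Hj; case: (U (s i, s j)) (U (t i, t j)) => a b [c e] /= -> ->.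
move/cl_inj: HU => [Hsi Hsj].
apply/ffunP => k; have := Hk k; rewrite /= !ffunE.
case: eqP => [->|_]; first by rewrite Hsi.
by case: eqP => [->|_]; first by rewrite Hsj.
Qed.


Definition near (t : nat) (x y : site) :=
  [forall a, ((x a : nat) - y a <= t)%N && ((y a : nat) - x a <= t)%N].

Lemma nearP t (x y : site) : reflect (forall a, ((x a : nat) - y a <= t)%N /\ ((y a : nat) - x a <= t)%N) (near t x y).
Proof.
apply: (iffP forallP) => H a; first by case/andP: (H a).
by case: (H a) => -> ->.
Qed.

Lemma near_refl t (x : site) : near t x x.
Proof. by apply/nearP => a; rewrite subnn. Qed.

Lemma near_sym t (x y : site) : near t x y = near t y x.
Proof. by apply/nearP/nearP => H a; case: (H a). Qed.

Lemma near_trans s t (x y z : site) : near s x y -> near t y z -> near (s + t) x z.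
Proof.
move=> /nearP H1 /nearP H2; apply/nearP => a.
case: (H1 a) (H2 a) => h1 h2 [h3 h4]; lia.
Qed.

Lemma near_le s t (x y : site) : (s <= t)%N -> near s x y -> near t x y.
Proof. move=> st /nearP H; apply/nearP => a; case: (H a) => h1 h2; lia. Qed.

Lemma lat_adj_near1 (x y : site) : lat_adj x y -> near 1 x y.
Proof.
rewrite /lat_adj => /eqP H; apply/nearP => a.
have : ((x a - y a) + (y a - x a) <= 1)%N.
  by rewrite -H (bigD1 a) //= leq_addr.
lia.
Qed.

Lemma lat_adj_neq (x y : site) : lat_adj x y -> x != y.
Proof.
rewrite /lat_adj; apply: contraL => /eqP ->.
by rewrite big1 // => a _; rewrite subnn.
Qed.

Lemma anti_common (s t : pauli) : ~~ commute s t -> exists y, (s y != p0) && (t y != p0).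
Proof.
rewrite commuteE negbK => H.
apply/existsP; apply: contraLR H => /existsPn H.
rewrite big1 // => y _; move: (H y); rewrite negb_and !negbK.
by case/orP => /eqP ->; [case: (t y) => [[] []] | rewrite anti1_0r].
Qed.

Lemma commute_pX (u : pauli) i : commute u (pX i) = ~~ (u i).2.
Proof.
rewrite commuteE (bigD1 i) //= big1 ?addbF => [|x xi]; rewrite ffunE.
  by rewrite eqxx; case: (u i) => [[] []].
by rewrite (negbTE xi) anti1_0r.
Qed.

Lemma commute_pZ (u : pauli) i : commute u (pZ i) = ~~ (u i).1.
Proof.
rewrite commuteE (bigD1 i) //= big1 ?addbF => [|x xi]; rewrite ffunE.
  by rewrite eqxx; case: (u i) => [[] []].
by rewrite (negbTE xi) anti1_0r.
Qed.

Definition lsites (U : layer D L) := flatten [seq [:: g.1.1; g.1.2] | g <- U].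

Lemma layer_prop (U : layer D L) (s : pauli) : layer_ok U -> forall x,
 (x \notin lsites U -> apply_layer U s x = s x) /\
 (apply_layer U s x != p0 -> exists2 y, s y != p0 & near 1 y x).
Proof.
elim: U => [|[[i j] V] U IH] /=.
  by move=> _ x; split => // H; exists x => //; apply: near_refl.
rewrite /layer_ok /= => /andP [/andP [adj allU]] /andP [ni /andP [nj uU]].
have okU : layer_ok U by rewrite /layer_ok allU uU.
have ij := lat_adj_neq adj.
have nj' : j \notin lsites U by [].
have ni' : i \notin lsites U by move: ni; rewrite inE negb_or => /andP [].
move=> x; rewrite /lsites /= !inE negb_or.
have [Wi _] := IH okU i; have [Wj _] := IH okU j.
split.
  rewrite negb_or => /andP [xi /andP [xj xU]]; rewrite ffunE (negbTE xi) (negbTE xj).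
  by case: (IH okU x) => H _; apply: H.
rewrite ffunE; case: (x =P i) => [->|/eqP xi].
  move=> H.
  have : (apply_layer U s i, apply_layer U s j) != (p0, p0).
    by apply: contra H => /eqP ->; rewrite cl_zero.
  rewrite (Wi ni') (Wj nj') xpair_eqE negb_and => /orP [Hi|Hj].
    by exists i => //; apply: near_refl.
  by exists j => //; rewrite near_sym; apply: lat_adj_near1.
case: (x =P j) => [->|/eqP xj].
  move=> H.
  have : (apply_layer U s i, apply_layer U s j) != (p0, p0).
    by apply: contra H => /eqP ->; rewrite cl_zero.
  rewrite (Wi ni') (Wj nj') xpair_eqE negb_and => /orP [Hi|Hj].
    by exists i => //; apply: lat_adj_near1.
  by exists j => //; apply: near_refl.
by case: (IH okU x) => _ H; apply: H.
Qed.

Lemma layer_gates_ok (U : layer D L) : layer_ok U -> all (@gate_ok) U.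
Proof.
case/andP => H _; elim: U H => [//|g U IH] /= /andP [h1 h2]; rewrite IH // andbT; exact: lat_adj_neq h1.
Qed.

Lemma apply_layer_commute (U : layer D L) (s t : pauli) : layer_ok U ->
  commute (apply_layer U s) (apply_layer U t) = commute s t.
Proof.
move/layer_gates_ok; rewrite /apply_layer; elim: U => //= g U IH /andP [gok aU].
by rewrite apply_gate_commute // IH.
Qed.

Lemma apply_layer_inj (U : layer D L) : layer_ok U -> injective (apply_layer U).
Proof.
move/layer_gates_ok; rewrite /apply_layer; elim: U => [_ s t //|g U IH] /= /andP [gok aU].
by move=> s t /(apply_gate_inj gok) /(IH aU).
Qed.

Section Heis.
Variable Ls : seq (layer D L).
Hypothesis okLs : all (@layer_ok D L) Ls.

Definition hfun (P : pauli) := foldr (@apply_layer D L) P Ls.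

Lemma hfun_commute (s t : pauli) : commute (hfun s) (hfun t) = commute s t.
Proof.
rewrite /hfun; elim: Ls okLs => //= U Ls' IH /andP [oU oL].
by rewrite apply_layer_commute // IH.
Qed.

Lemma hfun_inj : injective hfun.
Proof.
rewrite /hfun; elim: Ls okLs => [_ s t //|U Ls' IH] /= /andP [oU oL].
by move=> s t /(apply_layer_inj oU) /(IH oL).
Qed.

Lemma hfun_cone (P : pauli) y : hfun P y != p0 -> exists2 x, P x != p0 & near (size Ls) x y.
Proof.
rewrite /hfun; elim: Ls okLs y => /= [_|U Ls' IH /andP [oU oL]] y.
  by move=> H; exists y => //; apply: near_refl.
case: (layer_prop (foldr (@apply_layer D L) P Ls') oU y) => _ H /H [z /(IH oL) [x Px xz] zy].
by exists x => //; rewrite -add1n addnC; apply: near_trans zy.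
Qed.

Lemma hfun_fcone (u : pauli) x : u x != p0 -> exists2 y, hfun u y != p0 & near (size Ls) x y.
Proof.
move=> ux.
have [P [HP Px]] : exists P, ~~ commute u P /\ forall y, P y != p0 -> y = x.
  case E: (u x) => [a b].
  case: b E => E.
    exists (pX x); split; first by rewrite commute_pX E.
    by move=> y; rewrite ffunE; case: (y =P x) => // _; rewrite eqxx.
  case: a E => E; last by move: ux; rewrite E.
  exists (pZ x); split; first by rewrite commute_pZ E.
  by move=> y; rewrite ffunE; case: (y =P x) => // _; rewrite eqxx.
rewrite -hfun_commute in HP.
case: (anti_common HP) => y /andP [h1 h2].
exists y => //.
case: (hfun_cone h2) => z /Px -> //.
Qed.

End Heis.

End Pauli.


Lemma card_bigcup_leq (I T : finType) (A : {set I}) (F : I -> {set T}) :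
  (#|\bigcup_(i in A) F i| <= \sum_(i in A) #|F i|)%N.
Proof.
elim/big_rec2: _ => [|i m U _ H]; first by rewrite cards0.
rewrite cardsU; lia.
Qed.

Lemma card_le_code (T C : finType) (X : {set T}) (code : T -> C) :
  {in X &, injective code} -> (#|X| <= #|C|)%N.
Proof. by move=> inj; rewrite -(card_in_imset inj) max_card. Qed.

Lemma card_imset_code (T U C : finType) (f : T -> U) (X : {set T}) (code : T -> C) :
  {in X &, forall x x', code x = code x' -> f x = f x'} -> (#|f @: X| <= #|C|)%N.
Proof.
move=> H.
have [->|[x0 x0X]] := set_0Vmem X; first by rewrite imset0 cards0.
pose h c := f (odflt x0 [pick x in X | code x == c]).
have sub : f @: X \subset h @: (code @: X).
  apply/subsetP => _ /imsetP [x xX ->].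
  apply/imsetP; exists (code x); first by apply/imsetP; exists x.
  rewrite /h; case: pickP => [x' /andP [x'X /eqP e]|/(_ x)]; last by rewrite xX eqxx.
  by rewrite /= (H x' x).
apply: leq_trans (subset_leq_card sub) _.
apply: leq_trans (leq_imset_card _ _) _; exact: max_card.
Qed.

Section Cells.
Variables D L d : nat.
Hypothesis d_gt0 : (0 < d)%N.
Local Notation site := (site D L).
Local Notation idx := (@cell_idx D L d).

Definition cclose (x y : site) :=
  [forall a, (idx x a <= idx y a + 1)%N && (idx y a <= idx x a + 1)%N].

Lemma ccloseP (x y : site) : reflect (forall a, (idx x a <= idx y a + 1)%N /\ (idx y a <= idx x a + 1)%N) (cclose x y).
Proof.
apply: (iffP forallP) => H a; first by case/andP: (H a).
by case: (H a) => -> ->.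
Qed.

Lemma cclose_sym (x y : site) : cclose x y = cclose y x.
Proof. by apply/ccloseP/ccloseP => H a; case: (H a). Qed.

Lemma in_sublat (x y : site) : (y \in sublat d x) = [forall a, idx y a == idx x a].
Proof. by rewrite inE. Qed.

Lemma sublat_id (x : site) : x \in sublat d x.
Proof. by rewrite in_sublat; apply/forallP => a. Qed.

Lemma mem_sublat_idx (x y : site) : y \in sublat d x -> forall a, idx y a = idx x a.
Proof. by rewrite in_sublat => /forallP H a; apply/eqP. Qed.

Lemma sublat_eq (x y : site) : (forall a, idx x a = idx y a) -> sublat d x = sublat d y.
Proof.
move=> H; apply/setP => z; rewrite !in_sublat.
by apply/forallP/forallP => K a; rewrite (eqP (K a)) H.
Qed.

Lemma sublat_eq_idx (x y : site) : sublat d x = sublat d y -> forall a, idx x a = idx y a.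
Proof. by move=> E; apply: mem_sublat_idx; rewrite -E sublat_id. Qed.

Lemma mem_sublat_eq (x y : site) : y \in sublat d x -> sublat d y = sublat d x.
Proof. by move/mem_sublat_idx => H; apply: sublat_eq. Qed.

Lemma near_cclose t (x y : site) : (t <= 2 * d)%N -> near t x y -> cclose x y.
Proof.
move=> td /nearP H; apply/ccloseP => a; case: (H a) => h1 h2.
have d2 : (0 < 2 * d)%N by lia.
rewrite /cell_idx; split.
  rewrite -(divnDMl _ _ d2) mul1n; apply: leq_div2r; lia.
rewrite -(divnDMl _ _ d2) mul1n; apply: leq_div2r; lia.
Qed.

Lemma G_adj_cclose (x y : site) : G_adj d (sublat d x) (sublat d y) -> cclose x y.
Proof.
rewrite /G_adj; case/andP => _ /existsP [x' /andP [x'x /existsP [y' /andP [y'y /forallP H]]]].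
apply/ccloseP => a; move: (H a).
rewrite (mem_sublat_idx x'x) (mem_sublat_idx y'y); lia.
Qed.

Lemma G_adj_sym (A B : {set site}) : G_adj d A B = G_adj d B A.
Proof.
suff H : forall A B : {set site}, G_adj d A B -> G_adj d B A.
  by apply/idP/idP; apply: H.
move=> {}A {}B; rewrite /G_adj => /andP [AB /existsP [x /andP [xA /existsP [y /andP [yB /forallP H]]]]].
rewrite /G_adj eq_sym AB /=; apply/existsP; exists y; rewrite yB /=.
apply/existsP; exists x; rewrite xA /=; apply/forallP => a; move: (H a); lia.
Qed.

Lemma card_close_cells (y : site) (X : {set site}) :
  {in X, forall x, cclose x y} -> (#|(fun x => sublat d x) @: X| <= 3 ^ D)%N.
Proof.
move=> HX.
pose code (x : site) : {ffun 'I_D -> 'I_3} := [ffun a => inord (idx x a + 1 - idx y a)].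
have := @card_imset_code _ _ _ (fun x => sublat d x) X code.
rewrite card_ffun !card_ord; apply => x x' xX x'X E; apply: sublat_eq => a.
have /ffunP/(_ a) := E; rewrite !ffunE => /(congr1 val).
move/ccloseP: (HX x xX) => /(_ a) [h1 h2]; move/ccloseP: (HX x' x'X) => /(_ a) [h3 h4].
rewrite /= !inordK; lia.
Qed.

Lemma card_box (z : site) : (#|[set y | cclose z y]| <= (6 * d).+1 ^ D)%N.
Proof.
pose code (y : site) : {ffun 'I_D -> 'I_(6 * d).+1} :=
  [ffun a => inord (y a + 2 * d - 2 * d * idx z a)].
have d2 : (0 < 2 * d)%N by lia.
have B1 y a : cclose z y -> (y a < 2 * d * idx z a + 4 * d)%N.
  move/ccloseP => /(_ a) [_ h].
  have : (y a %/ (2 * d) < idx z a + 2)%N by rewrite /cell_idx in h *; lia.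
  rewrite ltn_divLR //; nia.
have B2 y a : cclose z y -> (2 * d * idx z a <= y a + 2 * d)%N.
  move/ccloseP => /(_ a) [h _]; move: h; rewrite /cell_idx => h.
  have := leq_trunc_div (y a) (2 * d).
  move: h; set q := (y a %/ (2 * d))%N; set r := (z a %/ (2 * d))%N => h h'.
  nia.
have := @card_le_code _ _ [set y | cclose z y] code.
rewrite card_ffun !card_ord; apply => y y'; rewrite !inE => yc y'c E.
apply/ffunP => a; apply: val_inj.
have /ffunP/(_ a) := E; rewrite !ffunE => /(congr1 val).
have := B1 y a yc; have := B1 y' a y'c; have := B2 y a yc; have := B2 y' a y'c.
move=> h1 h2 h3 h4; rewrite /= !inordK; lia.
Qed.

End Cells.


Lemma connect_cut (T : finType) (e : rel T) (C : {set T}) x y :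
  connect e x y -> x \in C -> y \notin C -> exists u v, [/\ u \in C, v \notin C & e u v].
Proof.
case/connectP => p + ->; elim: p x => [|w p IH] x /=; first by move=> _ ->.
case/andP => exw pw xC; case wC: (w \in C).
  by apply: IH.
by move=> _; exists x, w; rewrite wC.
Qed.

Section Walk.
Variables D L d : nat.
Local Notation site := (site D L).
Local Notation idx := (@cell_idx D L d).
Hypothesis d_gt0 : (0 < d)%N.

Definition cov (s : seq site) : {set {set site}} := [set sublat d r | r in s].

Lemma covP (s : seq site) A : reflect (exists2 r, r \in s & A = sublat d r) (A \in cov s).
Proof. by apply: (iffP imsetP) => [[r rs ->]|[r rs ->]]; exists r. Qed.

Lemma cclose_refl (x : site) : cclose d x x.
Proof. by apply/ccloseP => a; lia. Qed.

Lemma walk_exists (S : {set {set site}}) (x : site) :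
  G_connected d S -> sublat d x \in S ->
  exists q, [/\ path (cclose d) x q, cov (x :: q) = S & (size q <= 2 * (#|S| - 1))%N].
Proof.
case/andP => Ssub /forallP Sconn xS.
suff H : forall n q, #|S :\: cov (x :: q)| = n -> path (cclose d) x q ->
    cov (x :: q) \subset S -> (size q <= 2 * (#|cov (x :: q)| - 1))%N ->
    exists q', [/\ path (cclose d) x q', cov (x :: q') = S & (size q' <= 2 * (#|S| - 1))%N].
  apply: (H _ [::] erefl) => //.
    apply/subsetP => A /covP [r]; rewrite inE => /eqP -> ->; exact: xS.
elim=> [|n IH] q Hn pq covS sq.
  have E : cov (x :: q) = S.
    apply/eqP; rewrite eqEsubset covS /=; apply/subsetP => A AS.
    apply: contraT => Anc.
    have : A \in S :\: cov (x :: q) by rewrite inE Anc AS.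
    by move/eqP: Hn; rewrite cards_eq0 => /eqP ->; rewrite inE.
  by exists q; rewrite -E.
have [V VSc] : exists V, V \in S :\: cov (x :: q).
  by apply/set0Pn; rewrite -card_gt0 Hn.
move: (VSc); rewrite inE => /andP [Vnc VS].
have xc : sublat d x \in cov (x :: q) by apply/covP; exists x => //; rewrite inE eqxx.
have := Sconn (sublat d x); rewrite xS => /implyP/(_ isT)/forallP/(_ V); rewrite VS => /implyP/(_ isT).
move/connect_cut => /(_ _ xc Vnc) [U [W [Uc Wnc /and3P [US WS UW]]]].
case/covP: Uc => r rq Ur.
have [z Wz] : exists z, W = sublat d z.
  by move/subsetP: Ssub => /(_ W WS) /imsetP [z _ ->]; exists z.
have crz : cclose d r z by apply: (G_adj_cclose d_gt0); rewrite -Wz -Ur.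
have czr : cclose d z r by rewrite cclose_sym.
case/splitPl: rq pq covS sq Hn Wnc => p1 p2 lastr.
rewrite cat_path => /andP [pp1 pp2] covS sq Hn Wnc.
have rin : r \in x :: p1 ++ p2 by rewrite -lastr -cat_cons mem_cat mem_last.
have Ecov : cov (x :: p1 ++ z :: r :: p2) = W |: cov (x :: p1 ++ p2).
  apply/setP => A; rewrite in_setU1; apply/covP/orP.
    case=> r'; rewrite -cat_cons mem_cat !inE => /orP [r'1|/or3P [/eqP->|/eqP->|r'2]] ->.
    - by right; apply/covP; exists r' => //; rewrite -cat_cons mem_cat !inE r'1.
    - by left; rewrite Wz.
    - by right; apply/covP; exists r.
    - by right; apply/covP; exists r' => //; rewrite -cat_cons mem_cat !inE r'2 orbT.
  case=> [/eqP ->|/covP [r' r'in ->]].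
    by exists z; rewrite // -cat_cons mem_cat !inE eqxx orbT.
  exists r' => //; move: r'in; rewrite -!cat_cons !mem_cat !inE.
  by case/orP => ->; rewrite ?orbT.
apply: (IH (p1 ++ z :: r :: p2)).
- rewrite Ecov setUC -setDDl; move: Hn; rewrite (cardsD1 W (S :\: _)) inE Wnc WS /= add1n.
  by case.
- by move: pp2; rewrite cat_path pp1 /= lastr crz czr.
- by rewrite Ecov subUset sub1set WS covS.
- move: sq; rewrite Ecov cardsU1 Wnc !size_cat /=.
  have : (0 < #|cov (x :: p1 ++ p2)|)%N by apply/card_gt0P; exists (sublat d x); apply/covP; exists x; rewrite ?inE ?eqxx.
  move: (#|cov (x :: p1 ++ p2)|) (size p1) (size p2) => a b c; clear; lia.
Qed.


Definition idxf (y : site) : {ffun 'I_D -> nat} := [ffun a => idx y a].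
Definition stepf (v : {ffun 'I_D -> nat}) (dl : {ffun 'I_D -> 'I_3}) : {ffun 'I_D -> nat} :=
  [ffun a => v a + dl a - 1].
Definition codef (r r' : site) : {ffun 'I_D -> 'I_3} :=
  [ffun a => inord (idx r' a + 1 - idx r a)].
Definition decode l (c : site * l.-tuple {ffun 'I_D -> 'I_3}) : {set {set site}} :=
  [set sublat d y | y in [set y | idxf y \in idxf c.1 :: scanl stepf (idxf c.1) c.2]].

Lemma step_code (r r' : site) : cclose d r r' -> stepf (idxf r) (codef r r') = idxf r'.
Proof.
move/ccloseP => H; apply/ffunP => a; rewrite !ffunE.
case: (H a) => h1 h2; rewrite inordK; lia.
Qed.

Lemma scan_walk (x : site) q : path (cclose d) x q ->
  scanl stepf (idxf x) (pairmap codef x q) = map idxf q.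
Proof.
elim: q x => //= y q IH x /andP [cxy pq]; by rewrite step_code // IH.
Qed.

Lemma decode_walk l (x : site) q (pf : size (pairmap codef x q) == l) :
  path (cclose d) x q -> decode (x, Tuple pf) = cov (x :: q).
Proof.
move=> pq; rewrite /decode /= scan_walk //; apply/setP => A.
apply/imsetP/covP => [[y]|[r rin ->]].
  rewrite inE -map_cons => /mapP [r rin Er] ->; exists r => //.
  by apply: sublat_eq => a; move/ffunP: Er => /(_ a); rewrite !ffunE.
by exists r => //; rewrite inE -map_cons map_f.
Qed.

Lemma path_nseq (T : Type) (e : rel T) y m : e y y -> path e y (nseq m y).
Proof. by move=> eyy; elim: m => //= m ->; rewrite eyy. Qed.

Lemma card_anim k : (0 < k)%N ->
  (#|[set S : {set {set site}} | G_connected d S && (#|S| == k)]| <= #|{: site}| * 3 ^ (D * (2 * k)))%N.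
Proof.
move=> k0; set l := (2 * k)%N.
have sub : [set S : {set {set site}} | G_connected d S && (#|S| == k)] \subset
    [set decode c | c : site * l.-tuple {ffun 'I_D -> 'I_3}].
  apply/subsetP => S; rewrite inE => /andP [Sc /eqP Sk].
  have [A AS] : exists A, A \in S by apply/set0Pn; rewrite -card_gt0 Sk.
  have [x Ax] : exists x, A = sublat d x.
    by case/andP: Sc => /subsetP /(_ A AS) /imsetP [x _ ->] _; exists x.
  have xS : sublat d x \in S by rewrite -Ax.
  case: (walk_exists Sc xS) => q [pq covq sq].
  set q2 := q ++ nseq (l - size q) (last x q).
  have pq2 : path (cclose d) x q2 by rewrite cat_path pq path_nseq // cclose_refl.
  have cov2 : cov (x :: q2) = S.
    rewrite -covq; apply/setP => B; apply/covP/covP => [[r]|[r rin ->]].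
      rewrite -cat_cons mem_cat => /orP [rin ->|]; first by exists r.
      by rewrite mem_nseq => /andP [_ /eqP ->] ->; exists (last x q) => //; rewrite mem_last.
    by exists r => //; rewrite -cat_cons mem_cat rin.
  have pf : size (pairmap codef x q2) == l.
    rewrite size_pairmap size_cat size_nseq; apply/eqP.
    move: sq; rewrite Sk /l; move: (size q) => a; clear; lia.
  apply/imsetP; exists (x, Tuple pf) => //.
  by rewrite decode_walk.
apply: leq_trans (subset_leq_card sub) _.
apply: leq_trans (leq_imset_card _ _) _.
by rewrite card_prod card_tuple !card_ffun !card_ord expnM.
Qed.

End Walk.

Local Open Scope ring_scope.



Section Prob.
Variable R : realType.

Lemma powle (x y : R) n : 0 <= x -> x <= y -> x ^+ n <= y ^+ n.
Proof. move=> x0 xy; apply: lerXn2r; rewrite ?nnegrE //; exact: le_trans xy. Qed.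

Lemma prod_set (T : finType) (b : {set T}) (a c : R) :
  \prod_(x : T) (if x \in b then a else c) = a ^+ #|b| * c ^+ (#|T| - #|b|).
Proof.
rewrite (bigID (fun x => x \in b)) /=.
rewrite (eq_bigr (fun=> a)); last by move=> x ->.
rewrite [X in _ * X](eq_bigr (fun=> c)); last by move=> x /negbTE ->.
rewrite !prodr_const; congr (_ * _ ^+ _).
have := cardsC b; rewrite cardsE => <-.
by rewrite addKn.
Qed.

Lemma prob_avoid (T : finType) (g : R) (F : {set T}) :
  \sum_(b : {set T}) (if [disjoint b & F] then g ^+ #|b| * (1 - g) ^+ (#|T| - #|b|) else 0)
  = (1 - g) ^+ #|F|.
Proof.
pose f (x : T) (be : bool) : R := if be then (if x \in F then 0 else g) else 1 - g.
have E1 (b : {set T}) : (if [disjoint b & F] then g ^+ #|b| * (1 - g) ^+ (#|T| - #|b|) else 0)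
    = \prod_x f x (x \in b).
  case: ifP => dis.
    transitivity (\prod_x (if x \in b then g else 1 - g)); first by rewrite prod_set.
    apply: eq_bigr => x _; rewrite /f.
    case: ifP => // xb; case: ifP => // xF.
    by move/disjointFr: dis => /(_ x xb); rewrite xF.
  move/negbT: dis; case/pred0Pn => x /andP [xb xF].
  have xb' : x \in b by []; have xF' : x \in F by [].
  by rewrite (bigD1 x) //= /f xb' xF' mul0r.
rewrite (eq_bigr _ (fun b _ => E1 b)).
rewrite (reindex (fun h : {ffun T -> bool} => [set x | h x])) /=; last first.
  exists (fun b : {set T} => [ffun x => x \in b]) => h _.
    by apply/ffunP => x; rewrite ffunE inE.
  by apply/setP => x; rewrite inE ffunE.
under eq_bigr do under eq_bigr do rewrite inE.
rewrite -(bigA_distr_bigA f).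
rewrite (eq_bigr (fun x => if x \in F then 1 - g else 1)); last first.
  by move=> x _; rewrite big_bool /f; case: (x \in F) => /=; ring.
by rewrite -big_mkcond /= prodr_const.
Qed.

Lemma pauli_sum D L (V : {set site D L}) (z : R) :
  \sum_(u : pauli D L) (if support u \subset V then z ^+ #|support u| else 0)
  = (1 + 3%:R * z) ^+ #|V|.
Proof.
pose f (i : site D L) (p : bool * bool) : R :=
  if p == (false, false) then 1 else if i \in V then z else 0.
have E1 (u : pauli D L) : (if support u \subset V then z ^+ #|support u| else 0)
    = \prod_i f i (u i).
  case: ifP => sub.
    rewrite -prodr_const [RHS](bigID (fun i => i \in support u)) /=.
    rewrite [X in _ = _ * X]big1 ?mulr1; last first.
      by move=> i; rewrite inE negbK /f => ->.
    apply: eq_bigr => i iu; rewrite /f; move: (iu); rewrite inE => /negbTE ->.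
    by move/subsetP: sub => /(_ i iu) ->.
  move/negbT: sub; case/subsetPn => i iu iV.
  by rewrite (bigD1 i) //= /f; move: iu; rewrite inE => /negbTE ->; rewrite (negbTE iV) mul0r.
rewrite (eq_bigr _ (fun u _ => E1 u)) -(bigA_distr_bigA f).
rewrite (eq_bigr (fun i => if i \in V then 1 + 3%:R * z else 1)); last first.
  move=> i _; rewrite -(pair_big xpredT xpredT (fun a b => f i (a, b))) /=.
  by rewrite !big_bool /f /=; case: (i \in V) => /=; ring.
by rewrite -big_mkcond /= prodr_const.
Qed.

End Prob.


Section PerT.
Variables (D L d : nat).
Hypothesis d_gt0 : (0 < d)%N.
Local Notation site := (site D L).
Local Notation pauli := (pauli D L).
Local Notation p0 := (false, false).
Variable phi : pauli -> pauli.
Hypothesis P1 : forall (P : pauli) y, phi P y != p0 -> exists2 z, P z != p0 & near d z y.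
Hypothesis P2 : forall (u : pauli) z, u z != p0 -> exists2 y, phi u y != p0 & near d z y.

Definition Wc (A : {set site}) : {set site} := [set y | [exists z in A, cclose d z y]].
Definition Vc (S : {set {set site}}) : {set site} := \bigcup_(A in S) Wc A.
Definition Anim k : {set {set {set site}}} := [set S | G_connected d S && (#|S| == k)].

Lemma card_W (A : {set site}) : A \in sublats D L d -> (#|Wc A| <= (6 * d).+1 ^ D)%N.
Proof.
case/imsetP => z0 _ ->.
apply: leq_trans (card_box d_gt0 z0); apply: subset_leq_card; apply/subsetP => y.
rewrite !inE => /existsP [z /andP [zA /ccloseP H]]; apply/ccloseP => a.
by rewrite -(mem_sublat_idx zA a); apply: H.
Qed.

Lemma card_V (S : {set {set site}}) : S \subset sublats D L d ->
  (#|Vc S| <= #|S| * (6 * d).+1 ^ D)%N.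
Proof.
move/subsetP => Ssub; apply: leq_trans (card_bigcup_leq _ _) _.
rewrite -sum_nat_const; apply: leq_sum => A AS; exact: card_W (Ssub A AS).
Qed.

Lemma inT_props (u : pauli) k : in_T d k (phi u) ->
  exists S, [/\ S \in Anim k, support u \subset Vc S & (k <= 2 * 3 ^ D * #|support u|)%N].
Proof.
case/existsP => S /and4P [Sc /eqP Sk /forallP Ssupp kmet].
have Ssub : S \subset sublats D L d by case/andP: Sc.
exists S; split.
- by rewrite inE Sc Sk eqxx.
- apply/subsetP => y; rewrite inE => /P2 [x xs near_yx].
  have xS : sublat d x \in S by move: (Ssupp x); rewrite inE xs.
  apply/bigcupP; exists (sublat d x) => //; rewrite inE; apply/existsP; exists x.
  rewrite sublat_id /= cclose_sym; exact: (near_cclose d_gt0 (leq_pmull d (isT : (0 < 2)%N)) near_yx).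
- apply: leq_trans kmet _; rewrite -mulnA leq_mul2l /=.
  set met := [set A in S | _].
  have sub : met \subset \bigcup_(y in support u) ((fun x => sublat d x) @: [set x | cclose d x y]).
    apply/subsetP => A; rewrite inE => /andP [AS /existsP [i /andP [isupp iA]]].
    have Ai : A = sublat d i.
      move/subsetP: Ssub => /(_ A AS) /imsetP [z _ Az].
      by rewrite Az; apply/esym/mem_sublat_eq; rewrite -Az.
    move: isupp; rewrite inE => /P1 [y yu nyi].
    apply/bigcupP; exists y; first by rewrite inE.
    apply/imsetP; exists i => //; rewrite inE cclose_sym; exact: (near_cclose d_gt0 (leq_pmull d (isT : (0 < 2)%N)) nyi).
  apply: leq_trans (subset_leq_card sub) _.
  apply: leq_trans (card_bigcup_leq _ _) _.
  rewrite mulnC -sum_nat_const; apply: leq_sum => y _.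
  by apply: (@card_close_cells D L d d_gt0 y) => x; rewrite inE.
Qed.

Variable R : realType.


Definition theta : R := 3%:R ^+ (2 * D) * expR 2.

Lemma theta_ge1 : 1 <= theta.
Proof.
have h1 : (1 : R) <= 3%:R ^+ (2 * D) by rewrite exprn_ege1 // ler1n.
have h2 : (1 : R) <= expR 2 by apply: ltW; rewrite expR_gt1.
by have := ler_pM ler01 ler01 h1 h2; rewrite mulr1.
Qed.

Lemma final_eq k : (3 ^ (D * (2 * k)))%:R * (expR k%:R / theta ^+ k) = expR (- k%:R) :> R.
Proof.
have e : (D * (2 * k) = 2 * D * k)%N by lia.
rewrite /theta exprMn natrX e exprM.
set a := (3%:R ^+ (2 * D) : R) ^+ k.
have a0 : a != 0 by rewrite /a !expf_neq0 // pnatr_eq0.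
have e0 : expR 2 ^+ k != 0 :> R by rewrite expf_neq0 // gt_eqF // expR_gt0.
rewrite invfM (_ : a * (expR k%:R * (a^-1 / expR 2 ^+ k)) = expR k%:R / expR 2 ^+ k); last by field; apply/andP; split.
rewrite -expRM_natl -expRB; congr expR; ring.
Qed.

Lemma per_t k (x : R) : (0 < k)%N -> 0 <= x ->
  3%:R * theta ^+ (2 * 3 ^ D) * x * ((6 * d).+1 ^ D)%:R <= 1 ->
  \sum_(u : pauli) (if in_T d k (phi u) then x ^+ #|support u| else 0)
    <= #|{: site}|%:R * expR (- k%:R).
Proof.
move=> k0 x0 K.
have th1 := theta_ge1; have th0 : 0 < theta by apply: lt_le_trans th1.
set M := (2 * 3 ^ D)%N.
set z := theta ^+ M * x.
have z0 : 0 <= z by rewrite mulr_ge0 // exprn_ge0 // ltW.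
pose G (u : pauli) (S : {set {set site}}) :=
  if support u \subset Vc S then theta ^- k * z ^+ #|support u| else 0.
have G0 u S : 0 <= G u S by rewrite /G; case: ifP => // _; rewrite mulr_ge0 ?exprn_ge0 ?invr_ge0 ?exprn_ge0 // ltW.
have step1 : forall u, (if in_T d k (phi u) then x ^+ #|support u| else 0) <= \sum_(S in Anim k) G u S.
  move=> u; case: ifP => inT; last by apply: sumr_ge0.
  case: (inT_props inT) => S [SA sub kle].
  rewrite (bigD1 S) //=; apply: ler_wpDr; first by apply: sumr_ge0.
  rewrite /G sub (_ : z ^+ _ = theta ^+ (M * #|support u|) * x ^+ #|support u|); last by rewrite /z exprMn exprM.
  rewrite mulrA.
  rewrite -[X in X <= _]mul1r; apply: ler_wpM2r; first by apply: exprn_ge0.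
  rewrite ler_pdivlMl ?exprn_gt0 // mulr1; apply: ler_weXn2l => //.
apply: le_trans (ler_sum _ (fun u _ => step1 u)) _.
rewrite exchange_big /=.
have step2 : forall S, S \in Anim k -> \sum_(u : pauli) G u S <= expR k%:R * theta ^- k.
  move=> S; rewrite inE => /andP [Sc /eqP Sk].
  have Ssub : S \subset sublats D L d by case/andP: Sc.
  rewrite (eq_bigr (fun u => theta ^- k * (if support u \subset Vc S then z ^+ #|support u| else 0))); last first.
    by move=> u _; rewrite /G; case: ifP; rewrite ?mulr0.
  rewrite -mulr_sumr pauli_sum mulrC; apply: ler_wpM2r; first by rewrite invr_ge0 exprn_ge0 // ltW.
  apply: le_trans (_ : expR (3%:R * z) ^+ #|Vc S| <= _).
    apply: powle; last by apply: expR_ge1Dx.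
    by rewrite addr_ge0 // mulr_ge0.
  rewrite -expRM_natl ler_expR.
  have cV := card_V Ssub; rewrite Sk in cV.
  have : (#|Vc S|%:R <= k%:R * ((6 * d).+1 ^ D)%:R :> R) by rewrite -natrM ler_nat.
  move: K; rewrite /z mulrA.
  set B := (((6 * d).+1 ^ D)%:R : R); set c := 3%:R * theta ^+ M * x.
  have c0 : 0 <= c by rewrite mulr_ge0 // mulr_ge0 // exprn_ge0 // ltW.
  move=> K Vle.
  have B0 : 0 <= B by [].
  have k0' : 0 <= (k%:R : R) by [].
  have -> : #|Vc S|%:R * 3%:R * (theta ^+ M * x) = #|Vc S|%:R * c by rewrite /c; ring.
  nra.
apply: le_trans (ler_sum _ step2) _.
rewrite sumr_const.
have cA := card_anim D L d_gt0 k0.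
apply: le_trans (_ : (#|{: site}| * 3 ^ (D * (2 * k)))%:R * (expR k%:R * theta ^- k) <= _).
  rewrite -(mulr_natl (expR k%:R / theta ^+ k) #|Anim k|); apply: ler_wpM2r; first by rewrite mulr_ge0 ?expR_ge0 // invr_ge0 exprn_ge0 // ltW.
  by rewrite ler_nat.
rewrite natrM -mulrA; apply: ler_wpM2l => //.
by rewrite final_eq.
Qed.

End PerT.



Lemma analytic (R : realType) (D : nat) (g : R) (d : nat) :
  (1 <= D)%N -> 0 < g -> g < 1 ->
  32%:R * (g^-1 * 3%:R ^+ (2 * D) + g^-1 * D%:R * ln (g^-1 * D%:R)) < d%:R ->
  (0 < d)%N /\ 3%:R * theta D R ^+ (2 * 3 ^ D) * (1 - g) ^+ d * ((6 * d).+1 ^ D)%:R <= 1.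
Proof.
move=> D1 g0 g1 H.
set t : R := 3%:R ^+ D.
have t1 : 1 <= t by rewrite exprn_ege1 // ler1n.
have tD : D%:R <= t by rewrite /t -natrX ler_nat ltnW // ltn_expl.
have D0 : 1 <= D%:R :> R by rewrite ler1n.
have T2 : 3%:R ^+ (2 * D) = t * t :> R by rewrite mulnC exprM expr2.
have e2 : 3%:R <= expR 2 :> R by have := expR_ge1Dx (2 : R); rewrite (_ : 1 + 2 = 3%:R) //.
have ginv : 1 <= g^-1 by rewrite invf_ge1 // ltW.
set lam := ln (g^-1 * D%:R).
have lam0 : 0 <= lam.
  apply: ln_ge0; have := ler_pM ler01 ler01 ginv D0; by rewrite mulr1.
have Dlam0 : 0 <= D%:R * lam by rewrite mulr_ge0 // ler0n.
set a := g * d%:R.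
have Ha : 32%:R * (t * t + D%:R * lam) < a.
  have E : g * (32%:R * (g^-1 * 3%:R ^+ (2 * D) + g^-1 * D%:R * lam)) = 32%:R * (t * t + D%:R * lam).
    by rewrite T2; field; rewrite gt_eqF.
  by rewrite -E /a ltr_pM2l.
have a0 : 0 < a.
  apply: le_lt_trans Ha; rewrite mulr_ge0 // addr_ge0 // mulr_ge0 //; exact: le_trans t1.
have dpos : (0 < d)%N.
  by rewrite -(ltr0n R); move: a0; rewrite /a pmulr_rgt0.
split => //.
have dR1 : 1 <= d%:R :> R by rewrite ler1n.
set M := (2 * 3 ^ D)%N.
have MR : M%:R = 2%:R * t :> R by rewrite /M natrM natrX.
have B1 : theta D R ^+ M <= expR (M%:R * ((2 * D)%:R * 2 + 2)).
  rewrite expRM_natl; apply: powle; first by rewrite /theta mulr_ge0 ?expR_ge0 // exprn_ge0.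
  rewrite expRD expRM_natl /theta; apply: ler_wpM2r; first exact: expR_ge0.
  by apply: powle.
have B2 : (1 - g) ^+ d <= expR (- a).
  rewrite /a mulrC -mulrN expRM_natl; apply: powle; first by rewrite subr_ge0 ltW.
  by have := expR_ge1Dx (- g).
have d7 : 0 < 7%:R * d%:R :> R by rewrite mulr_gt0 // ltr0n.
have B3 : ((6 * d).+1 ^ D)%:R <= expR (D%:R * ln (7%:R * d%:R)) :> R.
  rewrite expRM_natl lnK ?posrE // natrX; apply: powle => //.
  by rewrite -natrM ler_nat; clear -dpos; lia.
have B4 : ln (7%:R * d%:R) <= 8%:R + lam + a / (8%:R * D%:R) :> R.
  have D0' : 0 < D%:R :> R by apply: lt_le_trans D0.
  have E7 : 7%:R * d%:R = 56%:R * (g^-1 * D%:R) * (a / (8%:R * D%:R)) :> R.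
    by rewrite /a; field; rewrite gt_eqF // gt_eqF.
  have p1 : 0 < g^-1 * D%:R by rewrite mulr_gt0 // invr_gt0.
  have p2 : 0 < a / (8%:R * D%:R) by rewrite divr_gt0 // mulr_gt0.
  have p0 : 0 < 56%:R * (g^-1 * D%:R) :> R by rewrite mulr_gt0.
  rewrite E7; set w := a / (8%:R * D%:R).
  have l56 : ln (56%:R : R) <= 8%:R.
    rewrite -ler_expR lnK ?posrE //.
    have h := ler_pM (ler0n _ 3) (ler0n _ 3) e2 e2.
    have := ler_pM (mulr_ge0 (ler0n _ 3) (ler0n _ 3)) (mulr_ge0 (ler0n _ 3) (ler0n _ 3)) h h.
    have e8 : (2 + 2 + (2 + 2) : R) = 8%:R by rewrite -!natrD.
    rewrite -!expRD e8 => h2; apply: le_trans h2.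
    by rewrite -!natrM ler_nat.
  have lw : ln w <= w by rewrite ltW // ln_sublinear.
  rewrite lnM ?posrE // lnM ?posrE // -/lam.
  lra.
have B5 : D%:R * ln (7%:R * d%:R) <= 8%:R * D%:R + D%:R * lam + a / 8%:R :> R.
  have D0' : 0 < D%:R :> R by apply: lt_le_trans D0.
  have := ler_wpM2l (ltW D0') B4.
  rewrite (_ : D%:R * (8%:R + lam + a / (8%:R * D%:R)) = 8%:R * D%:R + D%:R * lam + a / 8%:R) //.
  by field; rewrite gt_eqF.
have th0 : 0 <= theta D R ^+ M by rewrite exprn_ge0 // /theta mulr_ge0 ?expR_ge0 // exprn_ge0.
have g0' : 0 <= (1 - g) ^+ d by rewrite exprn_ge0 // subr_ge0 ltW.
have h1 := ler_pM (ler0n _ 3) th0 e2 B1.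
have h2 := ler_pM (mulr_ge0 (ler0n _ 3) th0) g0' h1 B2.
have step := ler_pM (mulr_ge0 (mulr_ge0 (ler0n _ 3) th0) g0') (ler0n _ _) h2 B3.
apply: le_trans step _.
rewrite -!expRD expR_le1 MR.
have tt1 : t <= t * t by rewrite ler_peMr // (le_trans ler01 t1).
have tDt : t * D%:R <= t * t by rewrite ler_wpM2l // (le_trans ler01 t1).
have : 2%:R + 2%:R * t * ((2 * D)%:R * 2 + 2) - a + (8%:R * D%:R + D%:R * lam + a / 8%:R) <= 0.
  rewrite natrM.
  move: Ha tt1 tDt t1 tD Dlam0; set T := t * t; set P := t * D%:R; set Q := D%:R * lam.
  move=> Ha tt1 tDt t1' tD' Q0.
  have -> : 2%:R + 2%:R * t * (2%:R * D%:R * 2 + 2) - a + (8%:R * D%:R + Q + a / 8%:R)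
           = 2%:R + 8%:R * P + 4%:R * t - a + 8%:R * D%:R + Q + a / 8%:R by rewrite /P; field.
  lra.
by apply: le_trans; rewrite lerD2l.
Qed.



Lemma all_take_ok D L (Us : seq (layer D L)) t : all (@layer_ok D L) Us -> all (@layer_ok D L) (take t Us).
Proof. by elim: Us t => [|U Us IH] [|t] //= /andP [-> H]; apply: IH. Qed.

Lemma card_prod_set (T : finType) d (A : 'I_d -> {set T}) :
  #|[set l : T * 'I_d | l.1 \in A l.2]| = (\sum_(t : 'I_d) #|A t|)%N.
Proof.
rewrite -sum1_card big_mkcond /=.
rewrite (eq_bigr (fun l => if l.1 \in A l.2 then 1 else 0)%N); last by move=> l _; rewrite inE.
rewrite -(pair_bigA _ (fun i t => if i \in A t then 1 else 0)%N) exchange_big /=.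
by apply: eq_bigr => t _; rewrite -sum1_card [RHS]big_mkcond.
Qed.

Section Main.
Variables (R : realType) (D L d : nat) (Us : seq (layer D L)) (g : R).
Hypothesis sUs : size Us = d.
Hypothesis okUs : all (@layer_ok D L) Us.
Hypothesis dpos : (0 < d)%N.
Local Notation site := (site D L).
Local Notation pauli := (pauli D L).
Local Notation p0 := (false, false).

Definition phi (t : 'I_d) : pauli -> pauli := heis Us t.+1.

Lemma phi_inj t : injective (phi t).
Proof. exact: (hfun_inj (all_take_ok t.+1 okUs)). Qed.

Lemma phi_commute t (s u : pauli) : commute (phi t s) (phi t u) = commute s u.
Proof. exact: (hfun_commute (all_take_ok t.+1 okUs)). Qed.

Lemma size_take_d n : (size (take n Us) <= d)%N.
Proof. by rewrite size_take -sUs; case: ifP => // /ltnW. Qed.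

Lemma phi_P1 t (P : pauli) y : phi t P y != p0 -> exists2 z, P z != p0 & near d z y.
Proof.
move/(hfun_cone (all_take_ok t.+1 okUs)) => [z Pz nz]; exists z => //.
exact: near_le (size_take_d _) nz.
Qed.

Lemma phi_P2 t (u : pauli) z : u z != p0 -> exists2 y, phi t u y != p0 & near d z y.
Proof.
move/(hfun_fcone (all_take_ok t.+1 okUs)) => [y uy ny]; exists y => //.
exact: near_le (size_take_d _) ny.
Qed.

Definition psi (t : 'I_d) := invF (@phi_inj t).

Definition Fs (s : pauli) : {set site * 'I_d} :=
  [set l : site * 'I_d | l.1 \in support (psi l.2 s)].

Lemma survive_disj (b : {set site * 'I_d}) (s : pauli) :
  Pi_M (M_b Us b) s != None -> [disjoint b & Fs s].
Proof.
rewrite /Pi_M; case: ifP => // /forall_inP H _.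
apply/pred0P => [[i t]] /=; apply/negbTE/negP => /andP [lb].
rewrite inE /= inE.
set u := psi t s.
have su : s = phi t u by rewrite /u /psi f_invF.
have HX : commute s (phi t (pX i)).
  apply: H; rewrite inE; apply/existsP; exists (i, t); rewrite lb /=; by rewrite eqxx.
have HZ : commute s (phi t (pZ i)).
  apply: H; rewrite inE; apply/existsP; exists (i, t); rewrite lb /=; by rewrite eqxx orbT.
rewrite su phi_commute in HX HZ.
rewrite phi_commute in HZ; rewrite commute_pX in HX; rewrite commute_pZ in HZ.
by move: HX HZ; case: (u i) => [[] []].
Qed.


Lemma prob_bound k (g0 : 0 < g) (g1 : g < 1) (k0 : (0 < k)%N)
  (K : 3%:R * theta D R ^+ (2 * 3 ^ D) * (1 - g) ^+ d * ((6 * d).+1 ^ D)%:R <= 1) :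
  prob_b g (fun b : {set site * 'I_d} => [exists s : pauli, in_T d k s && (Pi_M (M_b Us b) s != None)])
  <= (#|{: site}| * d)%:R * expR (- k%:R).
Proof.
rewrite /prob_b.
set w := fun b : {set site * 'I_d} => g ^+ #|b| * (1 - g) ^+ (#|{: site}| * d - #|b|).
have w0 b : 0 <= w b by rewrite /w mulr_ge0 // exprn_ge0 // ?subr_ge0 ltW.
apply: le_trans (_ : \sum_(b : {set site * 'I_d}) \sum_(s : pauli) (if in_T d k s then (if [disjoint b & Fs s] then w b else 0) else 0) <= _).
  apply: ler_sum => b _; case: ifP => [/existsP [s /andP [sT sP]]|_]; last first.
    by apply: sumr_ge0 => s _; do 2 case: ifP => //.
  rewrite (bigD1 s) //= sT (survive_disj sP); apply: ler_wpDr => //.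
  by apply: sumr_ge0 => s' _; do 2 case: ifP => //.
rewrite exchange_big /=.
have cardT : #|{: site * 'I_d}| = (#|{: site}| * d)%N by rewrite card_prod card_ord.
rewrite (eq_bigr (fun s => if in_T d k s then (1 - g) ^+ #|Fs s| else 0)); last first.
  move=> s _; case: ifP => _; last by rewrite big1.
  by rewrite -(prob_avoid g (Fs s)) cardT.
set x := (1 - g) ^+ d.
have x0 : 0 <= x by rewrite /x exprn_ge0 // subr_ge0 ltW.
apply: le_trans (_ : \sum_(s : pauli) (if in_T d k s then \sum_(t : 'I_d) x ^+ #|support (psi t s)| else 0) <= _).
  apply: ler_sum => s _; case: ifP => // _.
  rewrite /Fs (card_prod_set (fun t => support (psi t s))).
  set a := fun t : 'I_d => #|support (psi t s)|.
  pose t00 := Ordinal dpos.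
  case: (@arg_minnP _ t00 xpredT a isT) => t0 _ Hmin.
  have sum_ge : (d * a t0 <= \sum_(t : 'I_d) a t)%N.
    apply: leq_trans (_ : (\sum_(t : 'I_d) a t0 <= _)%N).
      by rewrite sum_nat_const card_ord.
    by apply: leq_sum => t _; apply: Hmin.
  apply: le_trans (ler_wiXn2l _ _ sum_ge) _; first by rewrite subr_ge0 ltW.
    by rewrite lerBlDr lerDl ltW.
  rewrite exprM -/x (bigD1 t0) //=; apply: ler_wpDr => //.
  by apply: sumr_ge0 => t _; apply: exprn_ge0.
rewrite (eq_bigr (fun s => \sum_(t : 'I_d) (if in_T d k s then x ^+ #|support (psi t s)| else 0))); last first.
  by move=> s _; case: ifP => _ //; rewrite big1.
rewrite exchange_big /=.
apply: le_trans (_ : \sum_(t : 'I_d) (#|{: site}|%:R * expR (- k%:R)) <= _); last first.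
  by rewrite sumr_const card_ord (_ : _ *+ d = (#|{: site}| * d)%:R * expR (- k%:R)) // natrM; ring.
apply: ler_sum => t _.
rewrite (reindex_inj (@phi_inj t)) /=.
under eq_bigr do rewrite /psi invF_f.
exact: (per_t dpos (@phi_P1 t) (@phi_P2 t) k0 x0 K).
Qed.

End Main.

Theorem lemma8 :
  forall R : realType, exists c : R, 0 < c /\
  forall (D : nat) (gamma : R), (1 <= D)%N -> 0 < gamma < 1 ->
  exists dstar : R,
    dstar <= c * (gamma^-1 * 3 ^+ (2 * D)
                  + gamma^-1 * D%:R * ln (gamma^-1 * D%:R)) /\
    forall (L d : nat) (Us : seq (layer D L)),
      size Us = d -> all (@layer_ok D L) Us -> dstar < d%:R ->
      forall k : nat, (1 <= k)%N ->
        prob_b gamma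
          (fun b : {set site D L * 'I_d} =>
             [exists s : pauli D L, in_T d k s && (Pi_M (M_b Us b) s != None)])
        <= (#|site D L| * d)%:R * expR (- k%:R).
Proof.
move=> R; exists 32%:R; split; first by rewrite ltr0n.
move=> D g D1 /andP [g0 g1].
exists (32%:R * (g^-1 * 3 ^+ (2 * D) + g^-1 * D%:R * ln (g^-1 * D%:R))); split => //.
move=> L d Us sUs okUs dlt k k1.
have [dpos K] := analytic D1 g0 g1 dlt.
exact: (prob_bound sUs okUs dpos g0 g1 k1 K).
Qed.
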